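(* Let $N,d\in\mathbb N$, let $D$ be a set and $C\subseteq D$, and let $b_0,b_1,\ldots,b_N:D\to\mathbb R$ be functions such that $b_k(\mathbf t)\ge 0$ for all $k$ and $\sum_{k=0}^N b_k(\mathbf t)=1$ for every $\mathbf t\in C$. Let $\omega_0,\ldots,\omega_N>0$ be weights and $\mathbf W_0,\ldots,\mathbf W_N\in\mathbb R^d$ control points, and define $$\mathbf S_N(\mathbf t):=\frac{\sum_{k=0}^N\omega_k\mathbf W_k b_k(\mathbf t)}{\sum_{k=0}^N\omega_k b_k(\mathbf t)}\qquad(\mathbf t\in C).$$ Fix $\mathbf t\in C$ with $b_k(\mathbf t)>0$ for $1\le k\le N$. Define $h_0:=1$, $\mathbf Q_0:=\mathbf W_0$ and, for $k=1,\ldots,N$, $$h_k:=\left(1+\frac{\omega_{k-1}b_{k-1}(\mathbf t)}{h_{k-1}\,\omega_k b_k(\mathbf t)}\right)^{-1},\qquad \mathbf Q_k:=(1-h_k)\mathbf Q_{k-1}+h_k\mathbf W_k .$$ Then these quantities are well defined and, for every $k=0,1,\ldots,N$: $h_k\in[0,1]$, $\mathbf Q_k\in\mathbb R^d$, and $\mathbf Q_k\in\operatorname{conv}\{\mathbf W_0,\mathbf W_1,\ldots,\mathbf W_k\}$ (so $\operatorname{conv}\{\mathbf Q_0,\ldots,\mathbf Q_k\}\subseteq\operatorname{conv}\{\mathbf W_0,\ldots,\mathbf W_k\}$). Moreover, $\mathbf S_N(\mathbf t)=\mathbf Q_N$.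
   Context: $\operatorname{conv}$ denotes the convex hull. The Euclidean space $\mathbb E^d$ of the paper is identified with $\mathbb R^d$. *)

(* Defs.v *)
From mathcomp Require Import all_boot all_order all_algebra.
From mathcomp Require Import reals.
Set Implicit Arguments. Unset Strict Implicit. Unset Printing Implicit Defensive.
Import Order.TTheory GRing.Theory Num.Theory.
Local Open Scope ring_scope.

Definition conv (R : realType) (d : nat) (A : 'rV[R]_d -> Prop) : 'rV[R]_d -> Prop :=
  fun p => exists (n : nat) (l : 'I_n -> R) (x : 'I_n -> 'rV[R]_d),
    (forall i, A (x i)) /\ (forall i, 0 <= l i) /\ \sum_(i < n) l i = 1 /\
    p = \sum_(i < n) l i *: x i.

Definition pts (R : realType) (d : nat) (P : nat -> 'rV[R]_d) (k : nat) : 'rV[R]_d -> Prop :=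
  fun p => exists2 i, (i <= k)%N & p = P i.

(* h_0 := 1, h_k := (1 + om_{k-1} bt_{k-1} / (h_{k-1} om_k bt_k))^-1,
   where bt k stands for b_k(t). *)
Fixpoint hseq (R : realType) (om bt : nat -> R) (k : nat) : R :=
  match k with
  | 0 => 1
  | k'.+1 => (1 + om k' * bt k' / (hseq om bt k' * (om k'.+1 * bt k'.+1)))^-1
  end.

Fixpoint Qseq (R : realType) (d : nat) (om bt : nat -> R) (W : nat -> 'rV[R]_d) (k : nat)
  : 'rV[R]_d :=
  match k with
  | 0 => W 0%N
  | k'.+1 => (1 - hseq om bt k'.+1) *: Qseq om bt W k' + hseq om bt k'.+1 *: W k'.+1
  end.

Definition S_N (R : realType) (d : nat) (D : Type) (N : nat) (om : nat -> R)
  (W : nat -> 'rV[R]_d) (b : nat -> D -> R) (t : D) : 'rV[R]_d :=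
  (\sum_(k < N.+1) om k * b k t)^-1 *: \sum_(k < N.+1) (om k * b k t) *: W k.

(* Main.v *)
Require Import Defs.
From mathcomp Require Import all_boot all_order all_algebra.
From mathcomp Require Import reals.
From mathcomp Require Import ring lra.
Import Order.TTheory GRing.Theory Num.Theory.
Local Open Scope ring_scope.

Fixpoint mu {R : nzRingType} (h : nat -> R) (k j : nat) : R :=
  match k with
  | 0 => (j == 0)%:R
  | k'.+1 => (1 - h k'.+1) * mu h k' j + h k'.+1 * (j == k'.+1)%:R
  end.

Lemma sum_delta (R : nzRingType) (V : lmodType R) (F : nat -> V) n m : (m < n)%N ->
  \sum_(j < n) ((j:nat) == m)%:R *: F j = F m.
Proof.
move=> mn; rewrite (bigD1 (Ordinal mn)) //= eqxx scale1r big1 ?addr0 // => j.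
by rewrite -val_eqE /= => /negbTE ->; rewrite scale0r.
Qed.

Lemma sum_deltaR (R : nzRingType) n m : (m < n)%N ->
  \sum_(j < n) ((j:nat) == m)%:R = 1 :> R.
Proof.
move=> mn; rewrite (bigD1 (Ordinal mn)) //= eqxx big1 ?addr0 // => j.
by rewrite -val_eqE /= => /negbTE ->.
Qed.

Lemma mu0 (R : nzRingType) (h : nat -> R) k j : (k < j)%N -> mu h k j = 0.
Proof.
elim: k j => [|k IH] j /= kj; first by case: j kj.
by rewrite IH ?(ltnW kj) // gtn_eqF // mulr0 mulr0 addr0.
Qed.

Lemma mu_ge0 (R : numDomainType) (h : nat -> R) K k j :
  (forall i, (i <= K)%N -> 0 <= h i <= 1) -> (k <= K)%N -> 0 <= mu h k j.
Proof.
move=> hh; elim: k => [|k IH] kK /=; first by rewrite ler0n.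
have /andP[h0 h1] := hh _ kK.
by rewrite addr_ge0 // mulr_ge0 ?ler0n ?IH ?(ltnW kK) // subr_ge0.
Qed.

Lemma mu_sum (R : nzRingType) (h : nat -> R) k n : (k < n)%N ->
  \sum_(j < n) mu h k j = 1.
Proof.
elim: k => [|k IH] kn /=; first by rewrite sum_deltaR.
by rewrite big_split /= -!mulr_sumr IH ?(ltnW kn) // sum_deltaR // !mulr1 subrK.
Qed.

Lemma Q_mu (R : realType) d (om bt : nat -> R) (W : nat -> 'rV[R]_d) k n :
  (k < n)%N -> Qseq om bt W k = \sum_(j < n) mu (hseq om bt) k j *: W j.
Proof.
elim: k => [|k IH] kn /=; first by rewrite sum_delta.
under eq_bigr => j _ do rewrite scalerDl -!scalerA.
by rewrite big_split /= -!scaler_sumr -IH ?(ltnW kn) // sum_delta.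
Qed.
Theorem theorem1 (R : realType) (N d : nat) (D : Type) (C : D -> Prop)
  (b : nat -> D -> R) (om : nat -> R) (W : nat -> 'rV[R]_d) (t : D) :
  (forall s, C s -> (forall k, (k <= N)%N -> 0 <= b k s) /\
                    \sum_(k < N.+1) b k s = 1) ->
  (forall k, (k <= N)%N -> 0 < om k) ->
  C t ->
  (forall k, (1 <= k <= N)%N -> 0 < b k t) ->
  let bt := fun k => b k t in
  let h := hseq om bt in
  let Q := Qseq om bt W in
  (* well-definedness: all denominators/inverted quantities are nonzero *)
  (\sum_(k < N.+1) om k * b k t != 0) /\
  (forall k, (1 <= k <= N)%N ->
     h k.-1 * (om k * bt k) != 0 /\
     1 + om k.-1 * bt k.-1 / (h k.-1 * (om k * bt k)) != 0) /\
  (forall k, (k <= N)%N ->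
     0 <= h k <= 1 /\
     conv (pts W k) (Q k) /\
     (forall p, conv (pts Q k) p -> conv (pts W k) p)) /\
  S_N N om W b t = Q N.
Proof.
move=> Hb Hom Ct Hbt bt h Q.
have [b0 bsum] := Hb t Ct.
pose c k := om k * bt k.
pose s k := \sum_(j < k.+1) c j.
have c0 : forall k, (k <= N)%N -> 0 <= c k.
  move=> k kN; apply: mulr_ge0; [exact: ltW (Hom _ kN)| exact: b0].
have cpos : forall k, (1 <= k <= N)%N -> 0 < c k.
  move=> k /andP[k1 kN]; rewrite mulr_gt0 ?Hom ?Hbt //; by apply/andP.
have s0 : forall k, (k <= N)%N -> 0 <= s k.
  move=> k kN; apply: sumr_ge0 => j _; apply: c0.
  by rewrite -ltnS (leq_trans (ltn_ord j)).
have sS : forall k, s k.+1 = s k + c k.+1 by move=> k; rewrite /s big_ord_recr.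
have hpos : forall k, (k <= N)%N -> 0 < h k /\ h k <= 1.
  elim=> [|k IH] kN; first by rewrite /h /= ltr01 lexx.
  have [hk _] := IH (ltnW kN).
  have cp : 0 < c k.+1 by apply: cpos; rewrite kN.
  rewrite /h /=.
  set x := (X in (1 + X)^-1).
  have x0 : 0 <= x.
    rewrite /x divr_ge0 ?c0 ?(ltnW kN) //.
    by rewrite mulr_ge0 // ltW // -/(c k.+1).
  have x1 : 0 < 1 + x by lra.
  by rewrite invr_gt0 x1 invf_le1 //; split=> //; lra.
have hs : forall k, (k <= N)%N -> h k * s k = c k.
  elim=> [|k IH] kN; first by rewrite /h /s /= big_ord1 mul1r.
  have [hk _] := hpos k (ltnW kN).
  have cp : 0 < c k.+1 by apply: cpos; rewrite kN.
  have sk := s0 k (ltnW kN).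
  rewrite sS /h /= -/(c k) -/(c k.+1) -/(h k) -(IH (ltnW kN)).
  have -> : 1 + h k * s k / (h k * c k.+1) = (s k + c k.+1) / c k.+1.
    by field; apply/andP; split; rewrite gt_eqF.
  rewrite invf_div mulrAC -mulrA divff ?mulr1 //; rewrite gt_eqF //; lra.
have sQ : forall k, (k <= N)%N -> s k *: Q k = \sum_(j < k.+1) c j *: W j.
  elim=> [|k IH] kN; first by rewrite /s /Q /= !big_ord1.
  have -> : Q k.+1 = (1 - h k.+1) *: Q k + h k.+1 *: W k.+1 by [].
  have e := hs _ kN.
  rewrite big_ord_recr /= -IH ?(ltnW kN) //.
  by rewrite scalerDr !scalerA mulrBr mulr1 [s k.+1 * _]mulrC e sS addrK.
have sN : s N != 0.
  rewrite gt_eqF //; case: N Hb Hom Hbt bsum b0 c0 cpos s0 sS hpos hs sQ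
    => [|N'] Hb Hom Hbt bsum b0 c0 cpos s0 sS hpos hs sQ.
    rewrite /s big_ord1 /c /bt; move: bsum; rewrite big_ord1 => ->.
    by rewrite mulr1 Hom.
  rewrite sS; have := s0 N' (leqnSn _); have := cpos N'.+1 (leqnn _); lra.
have hb : forall i, (i <= N)%N -> 0 <= hseq om bt i <= 1.
  by move=> i iN; have [h1 h2] := hpos i iN; rewrite ltW.
split; first exact: sN.
split.
  move=> k /andP[k1 kN]; have [hk _] := hpos k.-1 (leq_trans (leq_pred _) kN).
  have ck := cpos k (introT andP (conj k1 kN)).
  split; first by rewrite mulf_neq0 // gt_eqF.
  rewrite gt_eqF //.
  have : 0 <= om k.-1 * bt k.-1 / (h k.-1 * (om k * bt k)).
    rewrite divr_ge0 ?c0 ?(leq_trans (leq_pred _) kN) //.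
    by rewrite mulr_ge0 // ltW.
  lra.
split.
  move=> k kN; have [hk1 hk2] := hpos k kN.
  split; first by rewrite ltW.
  split.
    exists k.+1, (fun i : 'I_k.+1 => mu h k i), (fun i : 'I_k.+1 => W i).
    split; first by move=> i; exists i => //; rewrite -ltnS.
    split; first by move=> i; exact: (mu_ge0 _ _ _ _ _ hb kN).
    split; first by rewrite mu_sum.
    by rewrite /Q (Q_mu _ _ _ _ _ _ _ (ltnSn k)).
  move=> p [n [l [x [Hx [Hl [Hs ->]]]]]].
  have [f fk fx] := fin_all_exists2 Hx.
  exists k.+1, (fun j : 'I_k.+1 => \sum_(i < n) l i * mu h (f i) j),
    (fun j : 'I_k.+1 => W j).
  split; first by move=> i; exists i => //; rewrite -ltnS.
  split.
    move=> j; apply: sumr_ge0 => i _; rewrite mulr_ge0 //.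
    exact: (mu_ge0 _ _ _ _ _ hb (leq_trans (fk i) kN)).
  split.
    rewrite exchange_big /= -Hs; apply: eq_bigr => i _.
    by rewrite -mulr_sumr mu_sum ?mulr1 // ltnS.
  under eq_bigr => i _ do rewrite fx /Q (Q_mu _ _ _ _ _ _ _ (fk i : (f i < k.+1)%N)).
  rewrite (eq_bigr (fun j : 'I_k.+1 => \sum_(i < n) (l i * mu h (f i) j) *: W j));
    last by move=> j _; rewrite scaler_suml.
  rewrite exchange_big /=; apply: eq_bigr => i _.
  by rewrite scaler_sumr; apply: eq_bigr => j _; rewrite scalerA.
rewrite /S_N -[X in X^-1 *: _]/(s N) -[X in _ *: X]/(\sum_(j < N.+1) c j *: W j).
by rewrite -sQ // scalerA mulVf // scale1r.
Qed.
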